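(* For every complex $s$ with $\Re(s)>2$, \[\sum_{k=1}^\infty (-1)^{k-1}k\,\zeta(s,k)=2^{-s}\Big\{\zeta\big(s-1,\tfrac12\big)+\tfrac12 \zeta\big(s,\tfrac12\big)-\zeta(s-1)\Big\}.\]
   Context: $\zeta(s,\alpha)=\sum_{n=0}^\infty (n+\alpha)^{-s}$ denotes the Hurwitz zeta function ($\Re(s)>1$, $\alpha>0$), and $\zeta(s)=\zeta(s,1)$ is the Riemann zeta function. *)

(* Defs.v *)
From Stdlib Require Import Reals.
From Coquelicot Require Import Coquelicot.
Open Scope R_scope.

Definition cexp (z : C) : C :=
  (exp (Re z) * cos (Im z), exp (Re z) * sin (Im z)).

Definition Rcpow (x : R) (w : C) : C := cexp (Cmult w (RtoC (ln x))).

(* Hurwitz zeta: zeta(s,a) = sum_{n>=0} (n+a)^(-s), for Re s > 1, a > 0.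
   The complex series is summed componentwise (real and imaginary parts);
   for Re s > 1 it converges absolutely, so this is the usual sum. *)
Definition hurwitz_zeta (s : C) (a : R) : C :=
  (Series (fun n => Re (Rcpow (INR n + a) (Copp s))),
   Series (fun n => Im (Rcpow (INR n + a) (Copp s)))).

Definition riemann_zeta (s : C) : C := hurwitz_zeta s 1.

(* Main.v *)
Require Import Defs.
From Stdlib Require Import Reals Lra Lia.
From Coquelicot Require Import Coquelicot.
Open Scope R_scope.

Lemma cexp_plus a b : cexp (Cplus a b) = Cmult (cexp a) (cexp b).
Proof.
  unfold cexp; destruct a as [a1 a2]; destruct b as [b1 b2]; simpl.
  rewrite exp_plus, cos_plus, sin_plus.
  unfold Cmult; simpl. f_equal; ring.
Qed.

Lemma Rcpow_plus x w1 w2 : Rcpow x (Cplus w1 w2) = Cmult (Rcpow x w1) (Rcpow x w2).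
Proof.
  unfold Rcpow. rewrite <- cexp_plus. f_equal. ring.
Qed.

Lemma Rcpow_mult x y w : 0 < x -> 0 < y -> Rcpow (x*y) w = Cmult (Rcpow x w) (Rcpow y w).
Proof.
  intros hx hy. unfold Rcpow. rewrite <- cexp_plus. f_equal.
  rewrite ln_mult; auto. unfold RtoC, Cmult, Cplus; simpl. f_equal; ring.
Qed.

Lemma Rcpow_1 x : 0 < x -> Rcpow x (RtoC 1) = RtoC x.
Proof.
  intros hx. unfold Rcpow, cexp, RtoC, Cmult; simpl.
  replace (1 * ln x - 0 * 0) with (ln x) by ring.
  replace (1*0 + 0 * ln x) with 0 by ring.
  rewrite exp_ln; auto. rewrite cos_0, sin_0. f_equal; ring.
Qed.

Lemma Rcpow_shift x s : 0 < x ->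
  Rcpow x (Copp (Cminus s (RtoC 1))) = Cmult (RtoC x) (Rcpow x (Copp s)).
Proof.
  intros hx. replace (Copp (Cminus s (RtoC 1))) with (Cplus (RtoC 1) (Copp s)) by ring.
  rewrite Rcpow_plus, Rcpow_1; auto.
Qed.

Definition rp (x a : R) := exp (a * ln x).

Lemma Cmod_Rcpow x w : Cmod (Rcpow x w) = rp x (Re w).
Proof.
  unfold Rcpow, cexp, rp, Cmod; simpl.
  set (e := exp (fst w * ln x - snd w * 0)). set (t := fst w * 0 + snd w * ln x).
  replace (e * cos t * (e * cos t * 1) + e * sin t * (e * sin t * 1)) with (Rsqr e * (Rsqr (sin t) + Rsqr (cos t))) by (unfold Rsqr; ring).
  rewrite sin2_cos2, Rmult_1_r.
  rewrite sqrt_Rsqr. unfold e, Re. f_equal. rewrite Rmult_0_r, Rminus_0_r; reflexivity. unfold e; left; apply exp_pos.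
Qed.

Lemma rp_pos x a : 0 < rp x a.
Proof. apply exp_pos. Qed.

Lemma ln_gap x : 1 < x -> / x <= ln x - ln (x - 1).
Proof.
  intros hx.
  assert (h := exp_ineq1_le (ln ((x-1)/x))).
  rewrite exp_ln in h by (apply Rdiv_lt_0_compat; lra).
  rewrite ln_div in h by lra.
  replace ((x-1)/x) with (1 - /x) in h by (field; lra). lra.
Qed.

Lemma tele_ineq p x : 1 < p -> 1 < x ->
  (p-1) * rp x (-p) <= rp (x-1) (1-p) - rp x (1-p).
Proof.
  intros hp hx. unfold rp.
  set (u := ln x - ln (x-1)).
  assert (hu := ln_gap x hx). fold u in hu.
  replace ((1-p) * ln (x-1)) with ((1-p) * ln x + (p-1) * u) by (unfold u; ring).
  rewrite exp_plus.
  assert (h1 := exp_ineq1_le ((p-1)*u)).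
  assert (h2 : exp (-p * ln x) = exp ((1-p) * ln x) * / x).
  { replace (-p * ln x) with ((1-p) * ln x + - ln x) by ring.
    rewrite exp_plus, exp_Ropp, exp_ln; lra. }
  rewrite h2.
  assert (0 < exp ((1-p) * ln x)) by apply exp_pos.
  assert (0 < / x) by (apply Rinv_0_lt_compat; lra).
  assert ((p-1) * /x <= (p-1) * u) by (apply Rmult_le_compat_l; lra).
  nra.
Qed.

Definition rs (p : R) (n : nat) := rp (INR n + 1) (-p).

Lemma rp_1 a : rp 1 a = 1.
Proof. unfold rp. rewrite ln_1, Rmult_0_r, exp_0. reflexivity. Qed.

Lemma rs_partial p N : 1 < p ->
  sum_n (rs p) N <= 1 + (1 - rp (INR N + 1) (1-p)) / (p-1).
Proof.
  intros hp. induction N.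
  - rewrite sum_O. unfold rs. simpl. rewrite Rplus_0_l, !rp_1. unfold Rdiv. lra.
  - rewrite sum_Sn. change (sum_n (rs p) N + rs p (S N) <= 1 + (1 - rp (INR (S N) + 1) (1 - p)) / (p - 1)).
    assert (h := tele_ineq p (INR (S N) + 1) hp).
    replace (INR (S N) + 1 - 1) with (INR N + 1) in h by (rewrite S_INR; ring).
    assert (h' : 1 < INR (S N) + 1) by (rewrite S_INR; pose proof (pos_INR N); lra).
    specialize (h h').
    unfold rs at 2.
    apply Rle_trans with (1 + (1 - rp (INR N + 1) (1 - p)) / (p - 1) +
       (rp (INR N + 1) (1 - p) - rp (INR (S N) + 1) (1 - p)) / (p-1)).
    + apply Rplus_le_compat; auto.
      apply Rmult_le_reg_l with (p-1). lra.
      match goal with |- _ <= (p-1) * (?A / (p-1)) => replace ((p-1) * (A / (p-1))) with A by (set (AA := A); field; lra) end.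
      exact h.
    + apply Req_le. set (A := rp (INR N + 1) (1-p)); set (B := rp (INR (S N) + 1) (1-p)). field. lra.
Qed.

Lemma ex_series_rs p : 1 < p -> ex_series (rs p).
Proof.
  intros hp.
  assert (H : ex_finite_lim_seq (sum_n (rs p))).
  { apply ex_finite_lim_seq_incr with (1 + 1/(p-1)).
    - intros n. rewrite sum_Sn. change (sum_n (rs p) n <= sum_n (rs p) n + rs p (S n)).
      assert (0 < rs p (S n)) by apply rp_pos. lra.
    - intros n. eapply Rle_trans. apply rs_partial; auto.
      pose proof (rp_pos (INR n + 1) (1-p)).
      unfold Rdiv. apply Rplus_le_compat_l. apply Rmult_le_compat_r.
      left; apply Rinv_0_lt_compat; lra. lra. }
  destruct H as [l Hl]. exists l. exact Hl.
Qed.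

Lemma sum_n_Re (f : nat -> C) n : sum_n (fun k => Re (f k)) n = Re (sum_n f n).
Proof.
  induction n.
  - rewrite !sum_O. reflexivity.
  - rewrite !sum_Sn, IHn. reflexivity.
Qed.

Lemma sum_n_Im (f : nat -> C) n : sum_n (fun k => Im (f k)) n = Im (sum_n f n).
Proof.
  induction n.
  - rewrite !sum_O. reflexivity.
  - rewrite !sum_Sn, IHn. reflexivity.
Qed.

Lemma is_series_Re (f : nat -> C) l : is_series f l -> is_series (fun n => Re (f n)) (Re l).
Proof.
  unfold is_series. intros H.
  apply filterlim_ext with (fun n => Re (sum_n f n)).
  { intros n. rewrite sum_n_Re. reflexivity. }
  eapply filterlim_comp. exact H.
  apply filterlim_locally. intros eps. exists eps. intros z [H1 H2]. exact H1.
Qed.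

Lemma is_series_Im (f : nat -> C) l : is_series f l -> is_series (fun n => Im (f n)) (Im l).
Proof.
  unfold is_series. intros H.
  apply filterlim_ext with (fun n => Im (sum_n f n)).
  { intros n. rewrite sum_n_Im. reflexivity. }
  eapply filterlim_comp. exact H.
  apply filterlim_locally. intros eps. exists eps. intros z [H1 H2]. exact H2.
Qed.

Lemma is_series_C_components (f : nat -> C) l : is_series f l ->
  l = (Series (fun n => Re (f n)), Series (fun n => Im (f n))).
Proof.
  intros H. rewrite (is_series_unique _ _ (is_series_Re f l H)).
  rewrite (is_series_unique _ _ (is_series_Im f l H)).
  destruct l; reflexivity.
Qed.

Lemma HZ w a : 1 < Re w -> 1/2 <= a ->
  is_series (fun n => Rcpow (INR n + a) (Copp w)) (hurwitz_zeta w a).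
Proof.
  intros hw ha.
  assert (E : ex_series (fun n => Rcpow (INR n + a) (Copp w))).
  { apply (@ex_series_le C_AbsRing C_CompleteNormedModule) with (fun n => rp 2 (Re w) * rs (Re w) n).
    - intros n. change norm with Cmod. rewrite Cmod_Rcpow. unfold rs, rp.
      rewrite <- exp_plus. apply exp_le_3 || idtac.
      pose proof (pos_INR n).
      assert (Hl : ln (INR n + 1) <= ln 2 + ln (INR n + a)).
      { rewrite <- ln_mult by lra. apply ln_le; lra. }
      apply exp_le_3 || idtac.
      destruct (Rle_lt_dec (Re (Copp w) * ln (INR n + a)) (Re w * ln 2 + - Re w * ln (INR n + 1))) as [h|h].
      + destruct h as [h|h]. left; apply exp_increasing; auto. right; f_equal; auto.
      + exfalso. change (Re (Copp w)) with (- Re w) in h.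
        assert (0 <= Re w * (ln 2 + ln (INR n + a) - ln (INR n + 1))) by (apply Rmult_le_pos; lra).
        lra.
    - destruct (ex_series_rs (Re w) hw) as [l0 H0]. exists (rp 2 (Re w) * l0). exact (is_series_scal (rp 2 (Re w)) _ _ H0). }
  destruct E as [l Hl].
  unfold hurwitz_zeta. rewrite <- (is_series_C_components _ _ Hl). exact Hl.
Qed.

Fixpoint cc (m : nat) : R :=
  match m with
  | O => 1
  | S m' => cc m' + (-1) ^ (S m') * INR (S (S m'))
  end.

Lemma cc_S m : cc (S m) = cc m + (-1) ^ (S m) * INR (S (S m)).
Proof. reflexivity. Qed.

Lemma cc_closed k : cc (2*k) = INR k + 1 /\ cc (2*k+1) = - (INR k + 1).
Proof.
  induction k as [|k [IH1 IH2]].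
  - simpl. lra.
  - assert (A : cc (2 * S k) = INR (S k) + 1).
    { replace (2 * S k)%nat with (S (2*k+1)) by lia. rewrite cc_S, IH2.
      replace (S (2*k+1)) with (2 * S k)%nat by lia. rewrite pow_1_even.
      rewrite (S_INR (2 * S k)), mult_INR, (S_INR k).
      replace (INR 2) with 2 by (simpl; lra). ring. }
    split; auto.
    replace (2 * S k + 1)%nat with (S (2 * S k)) by lia.
    rewrite cc_S, A, pow_1_odd. rewrite (S_INR (S (2 * S k))), (S_INR (2 * S k)), mult_INR, (S_INR k).
    replace (INR 2) with 2 by (simpl; lra). ring.
Qed.

Lemma cc_bound m : Rabs (cc m) <= INR m + 1.
Proof.
  destruct (Nat.Even_or_Odd m) as [[k ->]|[k ->]].
  - destruct (cc_closed k) as [H _]. rewrite H, mult_INR. replace (INR 2) with 2 by (simpl; lra).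
    pose proof (pos_INR k). rewrite Rabs_right by lra. lra.
  - destruct (cc_closed k) as [_ H]. rewrite H, plus_INR, mult_INR. replace (INR 2) with 2 by (simpl; lra). replace (INR 1) with 1 by (simpl; lra).
    pose proof (pos_INR k). rewrite Rabs_left by lra. lra.
Qed.


Lemma Cmod_le_sum (z : C) : Cmod z <= Rabs (Re z) + Rabs (Im z).
Proof.
  destruct z as [x y]. unfold Cmod, Re, Im; simpl.
  rewrite <- (sqrt_Rsqr (Rabs x + Rabs y)) by (pose proof (Rabs_pos x); pose proof (Rabs_pos y); lra).
  apply sqrt_le_1_alt. unfold Rsqr.
  pose proof (Rabs_pos x); pose proof (Rabs_pos y).
  assert (x*x = Rabs x * Rabs x) by (rewrite <- Rabs_mult; rewrite Rabs_right; nra).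
  assert (y*y = Rabs y * Rabs y) by (rewrite <- Rabs_mult; rewrite Rabs_right; nra).
  nra.
Qed.

Lemma im_le_Cmod (c : C) : Rabs (Im c) <= Cmod c.
Proof. eapply Rle_trans. 2: apply Rmax_Cmod. apply Rmax_r. Qed.

Lemma re_RtoC_pair (a b : R) : Re (a, b) = a.
Proof. reflexivity. Qed.
Lemma im_RtoC_pair (a b : R) : Im (a, b) = b.
Proof. reflexivity. Qed.

Lemma normbound (f : nat -> C) l b : is_series f l -> (forall j, Cmod (f j) <= b j) ->
  ex_series b -> Cmod l <= 2 * Series b.
Proof.
  intros Hf Hb Eb.
  assert (ERe : ex_series (fun j => Rabs (Re (f j)))).
  { apply (@ex_series_le R_AbsRing R_CompleteNormedModule) with b; auto.
    intros j. change norm with Rabs. rewrite Rabs_Rabsolu. eapply Rle_trans. apply re_le_Cmod. auto. }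
  assert (EIm : ex_series (fun j => Rabs (Im (f j)))).
  { apply (@ex_series_le R_AbsRing R_CompleteNormedModule) with b; auto.
    intros j. change norm with Rabs. rewrite Rabs_Rabsolu. eapply Rle_trans. apply im_le_Cmod. auto. }
  rewrite (is_series_C_components f l Hf).
  eapply Rle_trans. apply Cmod_le_sum. rewrite re_RtoC_pair, im_RtoC_pair.
  assert (h1 : Rabs (Series (fun n => Re (f n))) <= Series b).
  { eapply Rle_trans. apply Series_Rabs; auto. apply Series_le; auto.
    intros j; split. apply Rabs_pos. eapply Rle_trans. apply re_le_Cmod. auto. }
  assert (h2 : Rabs (Series (fun n => Im (f n))) <= Series b).
  { eapply Rle_trans. apply Series_Rabs; auto. apply Series_le; auto.
    intros j; split. apply Rabs_pos. eapply Rle_trans. apply im_le_Cmod. auto. }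
  lra.
Qed.

Lemma pm_C (a b : C) : plus (Cminus a b) b = a.
Proof. change (Cplus (Cminus a b) b = a). ring. Qed.

Lemma nmR (x : R) : norm (minus x 0) = Rabs x.
Proof. unfold minus, plus, opp, norm. simpl. change abs with Rabs. f_equal. ring. Qed.

Lemma nmC (x : C) : norm (minus x (RtoC 0)) = Cmod x.
Proof. unfold minus, plus, opp, norm. simpl. f_equal. ring. Qed.

Section Main.
Variable s : C.
Hypothesis hs : 2 < Re s.

Definition q (n : nat) : C := Rcpow (INR n + 1) (Copp s).
Definition Z (n : nat) : C := hurwitz_zeta s (INR (S n)).

Lemma Z_series n : is_series (fun j => q (j + n)) (Z n).
Proof.
  apply (is_series_ext (fun j => Rcpow (INR j + INR (S n)) (Copp s))).
  - intros j. unfold q. rewrite plus_INR, (S_INR n).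
    replace (INR j + (INR n + 1)) with (INR j + INR n + 1) by ring. reflexivity.
  - unfold Z. apply HZ. lra.
    rewrite S_INR. pose proof (pos_INR n). lra.
Qed.

Lemma Z_rec n : Z n = Cplus (q n) (Z (S n)).
Proof.
  assert (H := Z_series n).
  assert (H2 : is_series (fun j => q (S j + n)) (Cminus (Z n) (q n))).
  { apply (is_series_incr_1 (fun j => q (j + n))).
    match goal with |- is_series _ ?L => replace L with (Z n) end. exact H.
    symmetry. exact (pm_C (Z n) (q n)). }
  assert (H3 : is_series (fun j => q (S j + n)) (Z (S n))).
  { apply (is_series_ext (fun j => q (j + S n))). 2: exact (Z_series (S n)).
    intros j. replace (S j + n)%nat with (j + S n)%nat by lia. reflexivity. }
  assert (E : Cminus (Z n) (q n) = Z (S n)).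
  { exact (filterlim_locally_unique _ _ _ H2 H3). }
  rewrite <- E. generalize (Z n) (q n). intros a b. ring.
Qed.

Definition cT (n : nat) : C := Cmult (RtoC ((-1)^n * INR (S n))) (Z n).
Definition cA (m : nat) : C := Cmult (RtoC (cc m)) (q m).

Lemma partial N : @eq C (sum_n cT N) (Cplus (sum_n cA N) (Cmult (RtoC (cc N)) (Z (S N)))).
Proof.
  induction N.
  - rewrite !sum_O. unfold cT, cA. rewrite (Z_rec 0) at 1.
    change (cc 0) with 1. replace ((-1)^0 * INR 1) with 1 by (simpl; ring). ring.
  - rewrite !sum_Sn, IHN. change plus with Cplus.
    change (cT (S N)) with (Cmult (RtoC ((-1)^(S N) * INR (S (S N)))) (Z (S N))).
    change (cA (S N)) with (Cmult (RtoC (cc (S N))) (q (S N))).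
    rewrite cc_S. rewrite (Z_rec (S N)). rewrite RtoC_plus. generalize (Z (S N)) (Z (S (S N))) (q (S N)) (sum_n cA N). intros. ring.
Qed.

Lemma x_rp x a : 0 < x -> x * rp x a = rp x (a+1).
Proof.
  intros hx. unfold rp. rewrite <- (exp_ln x) at 1 by auto. rewrite <- exp_plus. f_equal. ring.
Qed.

Lemma Cmod_q m : Cmod (q m) = rp (INR m + 1) (- Re s).
Proof. unfold q. rewrite Cmod_Rcpow. reflexivity. Qed.

Lemma cA_bound m : norm (cA m) <= rs (Re s - 1) m.
Proof.
  change norm with Cmod. unfold cA. rewrite Cmod_mult, Cmod_R, Cmod_q.
  unfold rs. pose proof (pos_INR m).
  replace (- (Re s - 1)) with (- Re s + 1) by ring. rewrite <- x_rp by lra.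
  apply Rmult_le_compat_r. left; apply rp_pos. apply cc_bound.
Qed.

Lemma cA_series : exists LA, is_series cA LA.
Proof.
  apply (@ex_series_le C_AbsRing C_CompleteNormedModule) with (rs (Re s - 1)).
  apply cA_bound. apply ex_series_rs. lra.
Qed.

Definition Rr := rs (Re s - 1).

Lemma ex_Rr : ex_series Rr.
Proof. apply ex_series_rs. lra. Qed.

Lemma ex_tail N : ex_series (fun k => Rr (S N + k)).
Proof. apply (ex_series_incr_n Rr (S N)). apply ex_Rr. Qed.

Lemma E_bound N : Cmod (Cmult (RtoC (cc N)) (Z (S N))) <= 2 * Series (fun k => Rr (S N + k)).
Proof.
  rewrite Cmod_mult, Cmod_R.
  pose proof (pos_INR N) as hN.
  set (b := fun k => Rr (S N + k) * / (INR N + 1)).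
  assert (Hb : Cmod (Z (S N)) <= 2 * Series b).
  { apply normbound with (fun j => q (j + S N)).
    - apply Z_series.
    - intros j. rewrite Cmod_q. unfold b, Rr, rs.
      rewrite (Nat.add_comm (S N) j).
      replace (- (Re s - 1)) with (- Re s + 1) by ring.
      assert (hx : 0 < INR (j + S N) + 1) by (pose proof (pos_INR (j + S N)); lra).
      rewrite <- x_rp by exact hx.
      assert (INR N + 1 <= INR (j + S N) + 1).
      { rewrite plus_INR, S_INR. pose proof (pos_INR j). lra. }
      pose proof (rp_pos (INR (j + S N) + 1) (- Re s)).
      apply Rmult_le_reg_l with (INR N + 1). lra.
      set (y := rp (INR (j + S N) + 1) (- Re s)) in *. set (x := INR (j + S N) + 1) in *.
      replace ((INR N + 1) * (x * y * / (INR N + 1))) with (x*y) by (field; lra).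
      apply Rmult_le_compat_r; lra.
    - unfold b. apply ex_series_scal_r. apply ex_tail. }
  unfold b in Hb. rewrite Series_scal_r in Hb.
  eapply Rle_trans. apply Rmult_le_compat. apply Rabs_pos. apply Cmod_ge_0.
  apply cc_bound. exact Hb.
  set (T := Series (fun k => Rr (S N + k))). apply Req_le. field. lra.
Qed.

Lemma tail_lim : is_lim_seq (fun N => Series (fun k => Rr (S N + k))) 0.
Proof.
  apply is_lim_seq_ext with (fun N => Series Rr - sum_n Rr N).
  { intros N. rewrite (Series_incr_n Rr (S N)) by (lia || apply ex_Rr).
    rewrite sum_n_Reals. simpl pred. ring. }
  replace (Finite 0) with (Rbar_minus (Series Rr) (Series Rr)) by (simpl; f_equal; ring).
  apply is_lim_seq_minus'. apply is_lim_seq_const.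
  destruct ex_Rr as [l Hl]. rewrite (is_series_unique _ _ Hl). exact Hl.
Qed.

Lemma E_lim : filterlim (fun N => Cmult (RtoC (cc N)) (Z (S N))) eventually (locally (RtoC 0)).
Proof.
  apply (proj2 (filterlim_locally_ball_norm (K:=C_AbsRing) (U:=C_NormedModule) _ _)). intros eps.
  assert (H := proj1 (filterlim_locally_ball_norm (K:=R_AbsRing) (U:=R_NormedModule) _ _) tail_lim (pos_div_2 eps)).
  eapply filter_imp. 2: exact H.
  intros N HN. unfold ball_norm in *.
  rewrite nmR in HN. rewrite nmC.
  pose proof (E_bound N) as EB.
  change (Series (fun k => Rr (S (N + k)))) with (Series (fun k => Rr (S N + k))) in HN.
  pose proof (Cmod_ge_0 (cc N * Z (S N))).
  rewrite Rabs_right in HN by lra. change (pos (pos_div_2 eps)) with (eps/2) in HN. lra.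
Qed.

Lemma T_series LA : is_series cA LA -> is_series cT LA.
Proof.
  intros H. unfold is_series.
  apply filterlim_ext with (fun N => plus (sum_n cA N) (Cmult (RtoC (cc N)) (Z (S N)))).
  { intros N. symmetry. exact (partial N). }
  assert (HP := filterlim_comp_2 (F:=eventually) (fun N => sum_n cA N)
      (fun N => Cmult (RtoC (cc N)) (Z (S N))) plus H E_lim (filterlim_plus LA (RtoC 0))).
  assert (E0 : plus LA (RtoC 0) = LA) by (change (Cplus LA (RtoC 0) = LA); ring).
  rewrite E0 in HP. exact HP.
Qed.

End Main.

Lemma sum_pair (f : nat -> C) k :
  @eq C (sum_n (fun j => Cplus (f (2*j)%nat) (f (2*j+1)%nat)) k) (sum_n f (2*k+1)).
Proof.
  induction k.
  - rewrite sum_O. simpl. rewrite sum_Sn, sum_O. reflexivity.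
  - rewrite sum_Sn, IHk.
    replace (2 * S k + 1)%nat with (S (S (2*k+1))) by lia.
    rewrite (@sum_Sn C_AbelianMonoid f (S (2*k+1))), (@sum_Sn C_AbelianMonoid f (2*k+1)).
    replace (2 * S k)%nat with (S (2*k+1)) by lia.
    replace (S (2 * k + 1) + 1)%nat with (S (S (2*k+1))) by lia.
    change plus with Cplus. generalize (sum_n f (2*k+1)) (f (S (2*k+1))) (f (S (S (2*k+1)))).
    intros. ring.
Qed.

Lemma pair_series (f : nat -> C) l : is_series f l ->
  is_series (fun j => Cplus (f (2*j)%nat) (f (2*j+1)%nat)) l.
Proof.
  unfold is_series. intros H.
  apply filterlim_ext with (fun k => sum_n f (2*k+1)).
  { intros k. symmetry. exact (sum_pair f k). }
  apply (filterlim_comp _ _ _ (fun k => (2*k+1)%nat) (@sum_n C_AbelianMonoid f) eventually eventually (locally l)).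
  - apply eventually_subseq. intros n. lia.
  - exact H.
Qed.

Lemma Re_sm1 s : Re (Cminus s (RtoC 1)) = Re s - 1.
Proof. unfold Cminus, Cplus, Copp, Re, RtoC; simpl. ring. Qed.

Lemma term_id s k :
  Cmult (Rcpow 2 (Copp s))
    (Cplus (Cplus (Rcpow (INR k + 1/2) (Copp (Cminus s (RtoC 1))))
                  (Cmult (RtoC (1/2)) (Rcpow (INR k + 1/2) (Copp s))))
           (Copp (Rcpow (INR k + 1) (Copp (Cminus s (RtoC 1))))))
  = Cplus (cA s (2*k)) (cA s (2*k+1)).
Proof.
  pose proof (pos_INR k) as hk.
  unfold cA, q. destruct (cc_closed k) as [H1 H2]. rewrite H1, H2.
  rewrite !Rcpow_shift by lra.
  replace (INR (2*k) + 1) with (2 * (INR k + 1/2)) by (rewrite mult_INR; replace (INR 2) with 2 by (simpl; lra); field).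
  replace (INR (2*k+1) + 1) with (2 * (INR k + 1)) by (rewrite plus_INR, mult_INR; replace (INR 2) with 2 by (simpl; lra); replace (INR 1) with 1 by (simpl; lra); field).
  rewrite !Rcpow_mult by lra.
  replace (INR k + 1/2) with ((INR k + 1) - 1/2) by field.
  rewrite RtoC_minus, RtoC_opp.
  generalize (Rcpow 2 (Copp s)) (Rcpow (INR k + 1 - 1/2) (Copp s)) (Rcpow (INR k + 1) (Copp s)) (RtoC (INR k + 1)) (RtoC (1/2)).
  intros. ring.
Qed.

Lemma RHS_series s : 2 < Re s ->
  is_series (fun k => Cplus (cA s (2*k)) (cA s (2*k+1)))
    (Cmult (Rcpow 2 (Copp s))
       (Cminus
          (Cplus (hurwitz_zeta (Cminus s (RtoC 1)) (1 / 2))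
                 (Cmult (RtoC (1 / 2)) (hurwitz_zeta s (1 / 2))))
          (riemann_zeta (Cminus s (RtoC 1))))).
Proof.
  intros hs.
  assert (h1 : 1 < Re (Cminus s (RtoC 1))) by (rewrite Re_sm1; lra).
  assert (HA := HZ (Cminus s (RtoC 1)) (1/2) h1 ltac:(lra)).
  assert (HB := HZ s (1/2) ltac:(lra) ltac:(lra)).
  assert (HD := HZ (Cminus s (RtoC 1)) 1 h1 ltac:(lra)).
  assert (H1 := is_series_scal (RtoC (1/2)) _ _ HB).
  assert (H2 := is_series_plus _ _ _ _ HA H1).
  assert (H3 := is_series_minus _ _ _ _ H2 HD).
  assert (H4 := is_series_scal (Rcpow 2 (Copp s)) _ _ H3).
  unfold riemann_zeta.
  apply (is_series_ext _ _ _ (fun k => term_id s k)).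
  exact H4.
Qed.

Theorem mainTheorem8 (s : C) (hs : 2 < Re s) :
  is_series
    (fun n : nat => Cmult (RtoC ((-1) ^ n * INR (S n))) (hurwitz_zeta s (INR (S n))))
    (Cmult (Rcpow 2 (Copp s))
       (Cminus
          (Cplus (hurwitz_zeta (Cminus s (RtoC 1)) (1 / 2))
                 (Cmult (RtoC (1 / 2)) (hurwitz_zeta s (1 / 2))))
          (riemann_zeta (Cminus s (RtoC 1))))).
Proof.
  destruct (cA_series s hs) as [LA HLA].
  assert (HT := T_series s hs LA HLA).
  assert (HP := pair_series (cA s) LA HLA).
  assert (HR := RHS_series s hs).
  assert (E := filterlim_locally_unique _ _ _ HP HR).
  rewrite <- E. exact HT.
Qed.
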